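(* Let $G=(V,E,w)$ be an $n$-vertex directed graph with real edge weights, let $h>0$ be an integer and $\tau\ge 2n^2$ an integer. The procedure $\textsc{DetPreprocessing}(G,\tau,h)$ described below can be implemented to run in $O(n^3 h)$ time.
   Context: Let $i_h=\lceil \log_{3/2} h\rceil$ and $h_i=(3/2)^i$ for $i=0,\dots,i_h$. A path is $h'$-hop-restricted if it has at most $h'$ edges. The procedure $\textsc{DetPreprocessing}(G,\tau,h)$: initialize $C\gets\emptyset$, $\textsc{Congestion}(v)\gets 0$ for all $v\in V$, and $\pi^i_{s,t}\gets\bot$ (the empty path of weight $\infty$) for all $s,t\in V$, $i\in[0,i_h]$. Then process every vertex $s\in V$ exactly once as a root, in an arbitrary order; for each root $s$ and each $i\in[0,i_h]$ in turn: (1) compute, by $h_i$ rounds of Bellman-Ford from $s$ in the induced graph $G[V\setminus C]$, paths $\pi^i_{s,t}$ for all $t\in V$ that are shortest among $h_i$-hop-restricted paths from $s$ to $t$ in $G[V\setminus C]$; (2) for every $t\in V$ and every vertex $u$ on $\pi^i_{s,t}$, increase $\textsc{Congestion}(u)$ by $\lceil n/h_i\rceil$; (3) set $C\gets\{v\in V:\textsc{Congestion}(v)>\tau/2\}$. *)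

(* Defs.v *)
From HB Require Import structures.
From mathcomp Require Import all_boot all_order all_algebra.
Set Implicit Arguments. Unset Strict Implicit. Unset Printing Implicit Defensive.
Import Order.TTheory GRing.Theory Num.Theory.

(*    w u v = Some x means the edge u -> v exists with weight x, and None    *)
(*    means there is no edge.  R is any real (ordered) domain, e.g. the reals.*)
(*  - A path (walk) is its non-empty vertex list [:: v0; ...; vk]; it has    *)
(*    k edges ("hops").  The empty path ⊥ of weight ∞ is None.               *)
(*  - h_i = (3/2)^i ; "h_i-hop-restricted" = at most floor(h_i) edges,       *)
(*    floor((3/2)^i) = 3^i %/ 2^i ; ceil(n/h_i) = ceil(n 2^i / 3^i).         *)
(*  - i_h = ceil(log_{3/2} h) = least i with (3/2)^i >= h, i.e.             *)
(*    h * 2^i <= 3^i (such an i <= h always exists).                        *)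

Definition hop (i : nat) : nat := 3 ^ i %/ 2 ^ i.
Definition cinc (n i : nat) : nat := (n * 2 ^ i + 3 ^ i - 1) %/ 3 ^ i.
Definition ih (h : nat) : nat := find (fun i => h * 2 ^ i <= 3 ^ i) (iota 0 h.+1).

Record dp_state (n : nat) := DPState {
  dpC : {set 'I_n};
  dpCong : 'I_n -> nat;
  dpPi : 'I_n -> nat -> 'I_n -> option (seq 'I_n) }.

Section Spec.
Variables (R : realDomainType) (n : nat) (w : 'I_n -> 'I_n -> option R).
Local Open Scope ring_scope.

Fixpoint walk_ok (u : 'I_n) (p : seq 'I_n) : bool :=
  if p is v :: p' then (w u v != None) && walk_ok v p' else true.

Fixpoint walk_weight (u : 'I_n) (p : seq 'I_n) : R :=
  if p is v :: p' then odflt 0 (w u v) + walk_weight v p' else 0.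

Definition is_hpath (A : {set 'I_n}) (k : nat) (s t : 'I_n) (q : seq 'I_n) : bool :=
  if q is x :: p then
    [&& x == s, last x p == t, all (fun v => v \in A) q, walk_ok x p & (size p <= k)%N]
  else false.

Definition pweight (q : seq 'I_n) : R :=
  if q is x :: p then walk_weight x p else 0.

Definition shortest_hpath (A : {set 'I_n}) (k : nat) (s t : 'I_n)
    (po : option (seq 'I_n)) : Prop :=
  match po with
  | None => forall q, ~~ is_hpath A k s t q
  | Some q => is_hpath A k s t q /\
              forall q', is_hpath A k s t q' -> pweight q <= pweight q'
  end.

Variables (tau h : nat).

(* steps (2) and (3) for root s and index i, given the paths P t = pi^i_{s,t} *)
Definition dp_step (st : dp_state n) (s : 'I_n) (i : nat)
    (P : 'I_n -> option (seq 'I_n)) : dp_state n :=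
  let cong' := fun u => (dpCong st u + cinc n i *
                 #|[set t | if P t is Some q then u \in q else false]|)%N in
  @DPState n [set v | (tau < 2 * cong' v)%N] cong'
    (fun s' i' t => if (s' == s) && (i' == i) then P t else dpPi st s' i' t).

Inductive dp_run : dp_state n -> seq ('I_n * nat) -> dp_state n -> Prop :=
| dp_run_nil st : dp_run st [::] st
| dp_run_cons st s i P rest st' :
    (forall t, shortest_hpath (~: dpC st) (hop i) s t (P t)) ->
    dp_run (dp_step st s i P) rest st' ->
    dp_run st ((s, i) :: rest) st'.

Definition dp_init : dp_state n :=
  @DPState n set0 (fun _ => 0%N) (fun _ _ _ => None).

Definition dp_schedule (ord : seq 'I_n) : seq ('I_n * nat) :=
  [seq (s, i) | s <- ord, i <- iota 0 (ih h).+1].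

(* out is a possible outcome of DetPreprocessing(G, tau, h): every vertex is
   processed once as a root, in some order, and ties among shortest paths
   are broken arbitrarily. *)
Definition DetPreprocessing_outcome (out : dp_state n) : Prop :=
  exists ord, perm_eq ord (enum 'I_n) /\ dp_run dp_init (dp_schedule ord) out.

End Spec.

(* A computation of type M A returns a value and a number of elementary
   steps.  Every iteration of every loop (mfold, recursion) costs one tick;
   loop bodies otherwise only perform O(1) primitive operations (array
   read/write, arithmetic and comparisons on words and on weights). *)

Definition M (A : Type) := (A * nat)%type.
Definition mret {A} (a : A) : M A := (a, 0%N).
Definition mbind {A B} (m : M A) (f : A -> M B) : M B :=
  let: (a, c) := m in let: (b, d) := f a in (b, (c + d)%N).
Definition tick {A} (m : M A) : M A := (m.1, m.2.+1).
Fixpoint mfold {T S} (f : T -> S -> M S) (xs : seq T) (s : S) : M S :=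
  if xs is x :: xs' then tick (mbind (f x s) (mfold f xs')) else mret s.

Section Impl.
Variables (R : realDomainType) (n : nat) (w : 'I_n -> 'I_n -> option R).
Variables (tau h : nat).
Local Open Scope ring_scope.

Definition upd {A} (f : 'I_n -> A) (i : 'I_n) (v : A) : 'I_n -> A :=
  fun j => if j == i then v else f j.

(* allocating/initialising an array of size n costs n steps *)
Definition init_arr {A} (f : 'I_n -> A) : M ('I_n -> A) :=
  mbind (mfold (fun _ u => mret u) (enum 'I_n) tt) (fun _ => mret f).

Definition lt_opt (a : R) (b : option R) : bool :=
  if b is Some b' then a < b' else true.

Definition relax_v (C : 'I_n -> bool) (d : 'I_n -> option R) (v : 'I_n)
  : M (option R * option 'I_n) :=
  mfold (fun u (acc : option R * option 'I_n) =>
     mret (match d u, w u v with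
           | Some a, Some b =>
               if ~~ C u && ~~ C v && lt_opt (a + b) acc.1
               then (Some (a + b), Some u) else acc
           | _, _ => acc end))
   (enum 'I_n) (d v, None).

Definition bf_round (C : 'I_n -> bool) (d : 'I_n -> option R)
  : M (('I_n -> option R) * ('I_n -> option 'I_n)) :=
  mfold (fun v (acc : ('I_n -> option R) * ('I_n -> option 'I_n)) =>
           mbind (relax_v C d v) (fun r => mret (upd acc.1 v r.1, upd acc.2 v r.2)))
        (enum 'I_n) (d, fun _ => None).

Definition bf (C : 'I_n -> bool) (s : 'I_n) (k : nat)
  : M (('I_n -> option R) * (nat -> 'I_n -> option 'I_n)) :=
  mbind (init_arr (fun v => if (v == s) && ~~ C s then Some 0 else None)) (fun d0 =>
  mfold (fun r (acc : ('I_n -> option R) * (nat -> 'I_n -> option 'I_n)) =>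
     mbind (bf_round C acc.1) (fun res =>
       mret (res.1, fun r' => if r' == r then res.2 else acc.2 r')))
   (iota 1 k) (d0, fun _ _ => None)).

Fixpoint recon (par : nat -> 'I_n -> option 'I_n) (r : nat) (v : 'I_n)
    (acc : seq 'I_n) : M (seq 'I_n) :=
  if r is r'.+1 then
    tick (if par r v is Some u then recon par r' u (u :: acc)
          else recon par r' v acc)
  else mret acc.

Definition bf_paths (C : 'I_n -> bool) (s : 'I_n) (k : nat)
  : M ('I_n -> option (seq 'I_n)) :=
  mbind (bf C s k) (fun res =>
    mfold (fun t (P : 'I_n -> option (seq 'I_n)) =>
      if res.1 t is Some _ then
        mbind (recon res.2 k t [:: t]) (fun q => mret (upd P t (Some q)))
      else mret (upd P t None))
    (enum 'I_n) (fun _ => None)).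

(* step (2), each vertex of a path counted once (time-stamp array) *)
Definition cong_update (inc : nat) (P : 'I_n -> option (seq 'I_n))
    (cong : 'I_n -> nat) : M ('I_n -> nat) :=
  mbind (init_arr (fun _ : 'I_n => @None 'I_n)) (fun stamp0 =>
  mbind (mfold (fun t (acc : ('I_n -> nat) * ('I_n -> option 'I_n)) =>
     if P t is Some q then
       mfold (fun u (acc' : ('I_n -> nat) * ('I_n -> option 'I_n)) =>
           if acc'.2 u == Some t then mret acc'
           else mret (upd acc'.1 u (acc'.1 u + inc)%N, upd acc'.2 u (Some t)))
         q acc
     else mret acc) (enum 'I_n) (cong, stamp0))
  (fun r => mret r.1)).

Definition C_update (cong : 'I_n -> nat) : M ('I_n -> bool) :=
  mfold (fun v (C : 'I_n -> bool) => mret (upd C v (tau < 2 * cong v)%N))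
        (enum 'I_n) (fun _ => false).

(* computes i_h, maintaining p2 = 2^i and p3 = 3^i *)
Fixpoint find_ih (fuel i p2 p3 : nat) : M nat :=
  tick (if (h * p2 <= p3)%N then mret i
        else if fuel is f.+1 then find_ih f i.+1 (p2 * 2) (p3 * 3) else mret i).

Definition impl_state :=
  (('I_n -> bool) * ('I_n -> nat) * ('I_n -> nat -> 'I_n -> option (seq 'I_n)))%type.

(* root s, index i, with p2 = 2^i, p3 = 3^i *)
Definition process (s : 'I_n) (i p2 p3 : nat) (st : impl_state) : M impl_state :=
  let: (C, cong, pi) := st in
  let k := (p3 %/ p2)%N in
  let inc := ((n * p2 + p3 - 1) %/ p3)%N in
  mbind (bf_paths C s k) (fun P =>
  mbind (cong_update inc P cong) (fun cong' =>
  mbind (C_update cong') (fun C' =>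
  mret (C', cong', fun s' i' => if (s' == s) && (i' == i) then P else pi s' i')))).

Definition process_root (ihv : nat) (s : 'I_n) (st : impl_state) : M impl_state :=
  mbind (mfold (fun i (acc : impl_state * nat * nat) =>
            let: (st', p2, p3) := acc in
            mbind (process s i p2 p3 st') (fun st'' => mret (st'', (p2 * 2)%N, (p3 * 3)%N)))
         (iota 0 ihv.+1) (st, 1%N, 1%N)) (fun acc => mret acc.1.1).

Definition DetPre_impl : M impl_state :=
  mbind (find_ih h 0 1 1) (fun ihv =>
  mbind (init_arr (fun _ : 'I_n => false)) (fun C0 =>
  mbind (init_arr (fun _ : 'I_n => 0%N)) (fun cong0 =>
  (* initialisation pi^i_{s,t} <- ⊥ for all s, t and i in [0, i_h] *)
  mbind (mfold (fun _ u => mfold (fun _ u' => mfold (fun _ u'' => mret u'')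
            (enum 'I_n) u') (iota 0 ihv.+1) u) (enum 'I_n) tt) (fun _ =>
  mfold (process_root ihv) (enum 'I_n) (C0, cong0, fun _ _ _ => None))))).

End Impl.

Definition impl_outcome (n : nat) (st : impl_state n) : dp_state n :=
  let: (C, cong, pi) := st in @DPState n [set v | C v] cong pi.

(* Main.v *)
Require Import Defs.
From HB Require Import structures.
From mathcomp Require Import all_boot all_order all_algebra.
From mathcomp Require Import zify.
From mathcomp Require Import ring.
From Stdlib Require Import FunctionalExtensionality.
Set Implicit Arguments. Unset Strict Implicit. Unset Printing Implicit Defensive.
Import Order.TTheory GRing.Theory Num.Theory.

Arguments mbind : simpl never.

Lemma mbind_val A B (m : M A) (f : A -> M B) : (mbind m f).1 = (f m.1).1.
Proof. by case: m => a c; rewrite /mbind /=; case: (f a). Qed.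
Lemma mbind_cost A B (m : M A) (f : A -> M B) : (mbind m f).2 = (m.2 + (f m.1).2)%N.
Proof. by case: m => a c; rewrite /mbind /=; case: (f a). Qed.
Lemma mfold_cons T S (f : T -> S -> M S) x xs s :
  (mfold f (x :: xs) s).1 = (mfold f xs (f x s).1).1.
Proof. by rewrite /= mbind_val. Qed.
Lemma mfold_cons_cost T S (f : T -> S -> M S) x xs s :
  (mfold f (x :: xs) s).2 = ((f x s).2 + (mfold f xs (f x s).1).2).+1.
Proof. by rewrite /= mbind_cost. Qed.
Lemma mbind_le A B (m : M A) (f : A -> M B) a b :
  (m.2 <= a -> (f m.1).2 <= b -> (mbind m f).2 <= a + b)%N.
Proof. by rewrite mbind_cost => H1 H2; apply: leq_add.
Qed.

Arguments mfold : simpl never.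
Lemma mfold_nil T S (f : T -> S -> M S) s : mfold f [::] s = mret s.
Proof. by []. Qed.

Lemma mfold_cost T S (f : T -> S -> M S) xs s b :
  (forall x s, (f x s).2 <= b) -> (mfold f xs s).2 <= size xs * b.+1.
Proof.
move=> Hb; elim: xs s => [|x xs IH] s //.
rewrite mfold_cons_cost /= mulSn. have := Hb x s; have := IH (f x s).1. lia.
Qed.

Lemma mfold_upd n A (f : 'I_n -> ('I_n -> A) -> M ('I_n -> A)) g l P0 :
  (forall x P, (f x P).1 = upd P x (g x)) ->
  forall t, (mfold f l P0).1 t = if t \in l then g t else P0 t.
Proof.
move=> Hf t; elim: l P0 => [|x l IH] P0 //.
rewrite mfold_cons IH Hf /upd in_cons.
by case: (t \in l); case: eqP => // ->.
Qed.

Lemma mfold_upd2 n A B (f : 'I_n -> ('I_n -> A) * ('I_n -> B) -> M (('I_n -> A) * ('I_n -> B)))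
  g1 g2 l acc :
  (forall x acc, (f x acc).1 = (upd acc.1 x (g1 x), upd acc.2 x (g2 x))) ->
  forall t, (mfold f l acc).1.1 t = (if t \in l then g1 t else acc.1 t) /\
            (mfold f l acc).1.2 t = (if t \in l then g2 t else acc.2 t).
Proof.
move=> Hf t; elim: l acc => [|x l IH] acc //.
rewrite mfold_cons; have [-> ->] := IH (f x acc).1.
rewrite Hf /upd in_cons /=.
by case: (t \in l); case: eqP => // ->.
Qed.

Section Graph.
Variables (R : realDomainType) (n : nat) (w : 'I_n -> 'I_n -> option R).
Local Open Scope ring_scope.

Definition leo (x y : option R) : bool :=
  if y is Some b then (if x is Some a then a <= b else false) else true.

Lemma leo_refl x : leo x x.
Proof. by case: x => //= a. Qed.
Lemma leo_trans x y z : leo x y -> leo y z -> leo x z.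
Proof.
case: z => [c|] //; case: y => [b|] //; case: x => [a|] //=.
exact: le_trans.
Qed.

Section Relax.
Variables (C : 'I_n -> bool) (d : 'I_n -> option R) (v : 'I_n).

Definition rgood (acc : option R * option 'I_n) : Prop :=
  match acc.2 with
  | None => acc.1 = d v
  | Some u => exists a b, [/\ d u = Some a, w u v = Some b, ~~ C u, ~~ C v &
                           acc.1 = Some (a + b)]
  end.

Definition rbody u (acc : option R * option 'I_n) : M (option R * option 'I_n) :=
  mret (match d u, w u v with
           | Some a, Some b =>
               if ~~ C u && ~~ C v && lt_opt (a + b) acc.1
               then (Some (a + b), Some u) else acc
           | _, _ => acc end).

Lemma relax_fold l acc : rgood acc ->
  let r := (mfold rbody l acc).1 in
  rgood r /\ leo r.1 acc.1 /\
  forall u a b, u \in l -> d u = Some a -> w u v = Some b -> ~~ C u -> ~~ C v ->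
     leo r.1 (Some (a + b)).
Proof.
elim: l acc => [|x l IH] acc Hg.
  by rewrite mfold_nil; split => //; split => //; apply: leo_refl.
rewrite mfold_cons.
set acc' := (rbody x acc).1.
have [Hg' [Hle' Hx]] : rgood acc' /\ leo acc'.1 acc.1 /\
    (forall a b, d x = Some a -> w x v = Some b -> ~~ C x -> ~~ C v ->
        leo acc'.1 (Some (a + b))).
  rewrite /acc' /rbody /=.
  case Hd: (d x) => [a|]; last by split => //; split => //; apply: leo_refl.
  case Hw: (w x v) => [b|]; last by split => //; split => //; apply: leo_refl.
  case: ifP => [/andP [/andP [HCx HCv] Hlt]|Hn].
    split; first by exists a, b.
    split.
      by move: Hlt; case: acc.1 => //= c /ltW.
    by move=> a' b' [<-] [<-] _ _ /=; apply: lexx.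
  split => //; split; first by apply: leo_refl.
  move=> a' b' [<-] [<-] HCx HCv; move: Hn; rewrite HCx HCv /=.
  by case: acc.1 => //= c /negbT; rewrite -leNgt.
have [Hr [Hle Hu]] := IH acc' Hg'.
split => //; split; first exact: leo_trans Hle Hle'.
move=> u a b; rewrite in_cons => /orP [/eqP -> | Hul] Hd Hw HC HCv.
  exact: leo_trans Hle (Hx a b Hd Hw HC HCv).
exact: (Hu u a b Hul Hd Hw HC HCv).
Qed.

Lemma relax_spec :
  let r := (relax_v w C d v).1 in
  rgood r /\ leo r.1 (d v) /\
  forall u a b, d u = Some a -> w u v = Some b -> ~~ C u -> ~~ C v ->
     leo r.1 (Some (a + b)).
Proof.
have [H1 [H2 H3]] := @relax_fold (enum 'I_n) (d v, None) erefl.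
split => //; split => // u a b; apply: H3; by rewrite mem_enum.
Qed.

Lemma relax_cost : ((relax_v w C d v).2 <= n)%N.
Proof.
have := @mfold_cost _ _ rbody (enum 'I_n) (d v, None) 0.
rewrite size_enum_ord muln1; apply => *; by [].
Qed.
End Relax.

Lemma walk_ok_rcons x p y :
  walk_ok w x (rcons p y) = walk_ok w x p && (w (last x p) y != None).
Proof. elim: p x => [|z p IH] x /=; first by rewrite andbT. by rewrite IH andbA. Qed.

Lemma walk_weight_rcons x p y :
  walk_weight w x (rcons p y) = walk_weight w x p + odflt 0 (w (last x p) y).
Proof.
elim: p x => [|z p IH] x /=; first by rewrite addr0 add0r.
by rewrite IH addrA.
Qed.

Lemma hpath_mono (A : {set 'I_n}) k k' s t q :
  (k <= k')%N -> is_hpath w A k s t q -> is_hpath w A k' s t q.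
Proof.
move=> Hk; case: q => // x p /and5P [H1 H2 H3 H4 H5].
by apply/and5P; split => //; apply: leq_trans Hk.
Qed.

Lemma hpath_rcons (A : {set 'I_n}) k s u v q :
  is_hpath w A k s u q -> v \in A -> w u v != None ->
  is_hpath w A k.+1 s v (rcons q v) /\
  pweight w (rcons q v) = pweight w q + odflt 0 (w u v).
Proof.
case: q => // x p /and5P [/eqP Ex /eqP Hl Hall Hw Hs] Hv Huv /=.
rewrite walk_weight_rcons Hl; split => //.
apply/and5P; split.
- by rewrite Ex.
- by rewrite last_rcons.
- by move: Hall; rewrite /= all_rcons Hv => /andP [-> ->].
- by rewrite walk_ok_rcons Hw Hl.
- by rewrite size_rcons.
Qed.

Section BF.
Variables (C : 'I_n -> bool) (s : 'I_n).
Definition Aset : {set 'I_n} := ~: [set v | C v].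
Definition d0 (v : 'I_n) : option R := if (v == s) && ~~ C s then Some 0 else None.
Fixpoint D r : 'I_n -> option R :=
  if r is r'.+1 then fun v => (relax_v w C (D r') v).1.1 else d0.
Definition Par r : 'I_n -> option 'I_n :=
  if r is r'.+1 then fun v => (relax_v w C (D r') v).1.2 else fun _ => None.

Lemma inA v : (v \in Aset) = ~~ C v.
Proof. by rewrite /Aset !inE. Qed.

Lemma recon_sound par k : (forall r, (0 < r <= k)%N -> par r = Par r) ->
  forall r, (r <= k)%N -> forall v x acc, D r v = Some x ->
  exists q, (recon par r v (v :: acc)).1 = q ++ acc /\
            is_hpath w Aset r s v q /\ pweight w q = x.
Proof.
move=> Hpar; elim=> [|r IH] Hr v x acc.
  rewrite /= /d0; case: ifP => // /andP [/eqP -> HCs] [<-].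
  exists [:: s]; split => //; split => //.
  by rewrite /is_hpath /= inA HCs eqxx.
move=> /= Hx; rewrite (Hpar r.+1) /=; last by rewrite Hr.
have [Hg _] := relax_spec C (D r) v.
move: Hx Hg; rewrite /rgood; case: (relax_v w C (D r) v).1 => [xv [u|]] /=.
  move=> -> [a [b [Hdu Hw HCu HCv [->]]]].
  have [q' [Hrec [Hq' Hwq']]] := IH (ltnW Hr) u a (v :: acc) Hdu.
  exists (rcons q' v); rewrite Hrec cat_rcons; split => //.
  have Hv : v \in Aset by rewrite inA.
  have Huv : w u v != None by rewrite Hw.
  have [H1 H2] := hpath_rcons Hq' Hv Huv.
  by rewrite H2 Hwq' Hw.
move=> -> Hdv.
have [q [Hrec [Hq Hwq]]] := IH (ltnW Hr) v x acc (esym Hdv).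
exists q; split => //; split => //; exact: hpath_mono Hq.
Qed.

Lemma D_opt r : forall q v, is_hpath w Aset r s v q -> leo (D r v) (Some (pweight w q)).
Proof.
elim: r => [|r IH] q v.
  case: q => // x p /and5P [/eqP Exs /eqP Hl Hall Hwk Hsz].
  have p0 : p = [::] by case: p Hsz Hl Hall Hwk.
  subst; move: Hall => /= /andP [Hs _].
  by rewrite /= /d0 eqxx -inA Hs /=.
have Hmono : leo (D r.+1 v) (D r v).
  by have [_ [H _]] := relax_spec C (D r) v.
case: q => // x p Hq; move: (Hq) => /and5P [/eqP Exs /eqP Hl Hall Hwk Hsz].
case/lastP: p Hq Hl Hall Hwk Hsz => [|p' y] Hq Hl Hall Hwk Hsz.
  apply: leo_trans Hmono (IH _ _ _).
  by move: Hq => /and5P [H1 H2 H3 H4 _]; apply/and5P.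
rewrite last_rcons in Hl; subst y.
set u := last x p'.
have Hq' : is_hpath w Aset r s u (x :: p').
  apply/and5P; split => //.
  - by rewrite Exs.
  - by move: Hall => /= /andP [-> ]; rewrite all_rcons => /andP [].
  - by move: Hwk; rewrite walk_ok_rcons => /andP [].
  - by move: Hsz; rewrite size_rcons.
have := IH _ _ Hq'.
case Hdu: (D r u) => [a|] // Ha.
move: Hwk; rewrite walk_ok_rcons => /andP [_].
case Hw: (w u v) => [b|] // _.
have Hall' : all (fun v => v \in Aset) (x :: rcons p' v) by [].
have HCu : ~~ C u.
  rewrite -inA; move/allP: Hall' => H; apply: H.
  rewrite /u; move: (mem_last x p'); rewrite !inE => /orP [->//|Hm].
  by rewrite mem_rcons inE Hm !orbT.
have HCv : ~~ C v.
  by rewrite -inA; move/allP: Hall' => H; apply: H; rewrite !inE mem_rcons inE eqxx orbT.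
have [_ [_ H3]] := relax_spec C (D r) v.
apply: leo_trans (H3 u a b Hdu Hw HCu HCv) _.
rewrite /= walk_weight_rcons -/u Hw /=.
by rewrite lerD2r.
Qed.


Lemma bf_round_val d : (bf_round w C d).1 =
  (fun v => (relax_v w C d v).1.1, fun v => (relax_v w C d v).1.2).
Proof.
have H := @mfold_upd2 n _ _ (fun v (acc : ('I_n -> option R) * ('I_n -> option 'I_n)) =>
   mbind (relax_v w C d v) (fun r => mret (upd acc.1 v r.1, upd acc.2 v r.2)))
  (fun v => (relax_v w C d v).1.1) (fun v => (relax_v w C d v).1.2) (enum 'I_n)
  (d, fun _ => None) (fun x acc => mbind_val _ _).
rewrite /bf_round; apply: injective_projections => /=;
  apply: functional_extensionality => t;
  [have [H1 _] := H t | have [_ H2] := H t]; by rewrite ?H1 ?H2 mem_enum.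
Qed.

Lemma bf_round_cost d : ((bf_round w C d).2 <= n * n.+1)%N.
Proof.
have := @mfold_cost _ _ (fun v (acc : ('I_n -> option R) * ('I_n -> option 'I_n)) =>
   mbind (relax_v w C d v) (fun r => mret (upd acc.1 v r.1, upd acc.2 v r.2)))
  (enum 'I_n) (d, fun _ => None) n.
rewrite size_enum_ord; apply => x acc; rewrite mbind_cost addn0; exact: relax_cost.
Qed.

Definition bfbody r (acc : ('I_n -> option R) * (nat -> 'I_n -> option 'I_n)) :=
  mbind (bf_round w C acc.1) (fun res =>
       mret (res.1, fun r' => if r' == r then res.2 else acc.2 r')).

Lemma bf_fold m : forall j acc, acc.1 = D j ->
  (forall r, (0 < r <= j)%N -> acc.2 r = Par r) ->
  (mfold bfbody (iota j.+1 m) acc).1.1 = D (j + m) /\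
  (forall r, (0 < r <= j + m)%N -> (mfold bfbody (iota j.+1 m) acc).1.2 r = Par r).
Proof.
elim: m => [|m IH] j acc H1 H2.
  by rewrite mfold_nil addn0.
rewrite -[iota _ _]/(j.+1 :: iota j.+2 m) mfold_cons -addSnnS.
apply: IH.
  by rewrite /bfbody mbind_val bf_round_val /= H1.
move=> r Hr; rewrite /bfbody mbind_val bf_round_val /= H1.
case: eqP => [->//|Hne]; apply: H2.
move: Hr Hne; lia.
Qed.

Lemma init_arr_val A (f : 'I_n -> A) : (init_arr f).1 = f.
Proof. by rewrite /init_arr mbind_val. Qed.

Lemma bf_val k : (bf w C s k).1.1 = D k /\
   (forall r, (0 < r <= k)%N -> (bf w C s k).1.2 r = Par r).
Proof.
rewrite /bf mbind_val init_arr_val.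
have := @bf_fold k 0 (d0, fun _ _ => None) erefl.
rewrite add0n; apply => r; lia.
Qed.

Lemma bf_paths_spec k t :
  shortest_hpath w Aset k s t ((bf_paths w C s k).1 t) /\
  (forall q, (bf_paths w C s k).1 t = Some q -> (size q <= k.+1)%N).
Proof.
rewrite /bf_paths mbind_val.
set res := (bf w C s k).1.
rewrite (@mfold_upd n _ _ (fun t => if res.1 t is Some _ then
     Some (recon res.2 k t [:: t]).1 else None)); last first.
  by move=> x P; case: (res.1 x) => [a|] //; rewrite mbind_val.
rewrite mem_enum.
have [Hd Hp] := bf_val k.
rewrite /res Hd.
case E: (D k t) => [x|]; last first.
  split => // q; apply/negP => Hq; have := D_opt Hq; by rewrite E.
have [q [Hrec [Hq Hwq]]] := @recon_sound (bf w C s k).1.2 k Hp k (leqnn k) t x [::] E.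
rewrite Hrec cats0; split.
  split => // q' Hq'; have := D_opt Hq'; by rewrite E Hwq.
move=> q0 [<-]; case: q Hq {Hrec Hwq} => // y p /and5P [_ _ _ _ Hs] /=.
by rewrite ltnS.
Qed.

End BF.
End Graph.

Lemma init_arr_cost n A (f : 'I_n -> A) : ((init_arr f).2 <= n)%N.
Proof.
rewrite /init_arr mbind_cost addn0.
have := @mfold_cost _ _ (fun (_ : 'I_n) (u : unit) => mret u) (enum 'I_n) tt 0.
by rewrite size_enum_ord muln1; apply.
Qed.

Lemma cardc n (p : pred 'I_n) : #|[set t | p t]| = count p (enum 'I_n).
Proof. by rewrite cardsE cardE size_filter enumT. Qed.

Section Cong.
Variables (n : nat) (inc : nat) (P : 'I_n -> option (seq 'I_n)).

Definition ib (t : 'I_n) u (acc' : ('I_n -> nat) * ('I_n -> option 'I_n)) :=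
  if acc'.2 u == Some t then mret acc'
  else mret (upd acc'.1 u (acc'.1 u + inc)%N, upd acc'.2 u (Some t)).

Definition ob t (acc : ('I_n -> nat) * ('I_n -> option 'I_n)) :=
  if P t is Some q then mfold (ib t) q acc else mret acc.

Lemma ib_fold t q : forall acc (m : seq 'I_n),
  (forall u, (acc.2 u == Some t) = (u \in m)) ->
  let r := (mfold (ib t) q acc).1 in
  (forall u, r.1 u = acc.1 u + inc * ((u \in q) && (u \notin m)))%N /\
  (forall u t', r.2 u = Some t' -> t' = t \/ acc.2 u = Some t').
Proof.
elim: q => [|x q IH] acc m Hm.
  rewrite mfold_nil /=; split => [u|u t' ->]; [by rewrite muln0 addn0 | by right].
rewrite mfold_cons /ib; case: ifP => Hx.
  have [H1 H2] := IH acc m Hm; split => // u.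
  rewrite H1 in_cons; case: (eqVneq u x) => [->|//].
  by rewrite -Hm Hx /= andbF.
have Hx' : x \notin m by rewrite -Hm Hx.
set acc' := (_, _).
have Hm' : forall u, (acc'.2 u == Some t) = (u \in x :: m).
  move=> u; rewrite /acc' /upd /= in_cons -Hm.
  by case: (eqVneq u x) => [->|]; rewrite ?eqxx.
have [H1 H2] := IH acc' (x :: m) Hm'; split.
  move=> u; rewrite H1 /acc' /upd /= !in_cons.
  case: (eqVneq u x) => [->|Hne] /=.
    by rewrite (negbTE Hx') /= andbF; lia.
  by [].
move=> u t' /H2 [->|]; first by left.
rewrite /acc' /upd /=; case: (eqVneq u x) => [_ [->]|_ ->]; by [left|right].
Qed.

Lemma ob_fold l : forall acc (done : seq 'I_n), uniq (done ++ l) ->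
  (forall u t', acc.2 u = Some t' -> t' \in done) ->
  forall u, ((mfold ob l acc).1.1 u =
     acc.1 u + inc * count (fun t => if P t is Some q then u \in q else false) l)%N.
Proof.
elim: l => [|x l IH] acc done Hu Hd u.
  by rewrite mfold_nil /= muln0 addn0.
rewrite mfold_cons.
have Hu' : uniq (rcons done x ++ l) by rewrite cat_rcons.
have Hxd : x \notin done.
  by move: Hu; rewrite cat_uniq /= => /and3P [_ /norP [] ].
rewrite /ob; case E: (P x) => [q|].
  have Hm : forall u, (acc.2 u == Some x) = (u \in [::]).
    move=> v; apply/negP => /eqP /Hd Hx; by rewrite Hx in Hxd.
  have [H1 H2] := ib_fold q Hm.
  rewrite (IH _ (rcons done x) Hu'); last first.
    move=> v t' /H2 [->|/Hd]; rewrite mem_rcons inE ?eqxx // => ->; by rewrite orbT.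
  rewrite H1 /= E andbT mulnDr addnA //.
rewrite (IH _ (rcons done x) Hu'); last first.
  by move=> v t' /Hd; rewrite mem_rcons inE => ->; rewrite orbT.
by rewrite /= E.
Qed.

Lemma cong_update_val cong :
  (cong_update inc P cong).1 = fun u => (cong u + inc *
     #|[set t | if P t is Some q then u \in q else false]|)%N.
Proof.
rewrite /cong_update mbind_val mbind_val init_arr_val.
apply: functional_extensionality => u.
rewrite cardc.
have Hd : forall u t', (fun _ : 'I_n => @None 'I_n) u = Some t' -> t' \in [::] by [].
have H := @ob_fold (enum 'I_n) (cong, fun _ => None) [::] (enum_uniq _) Hd u.
exact: H.
Qed.

Lemma cong_update_cost cong K : (forall t q, P t = Some q -> size q <= K)%N ->
  ((cong_update inc P cong).2 <= n + n * K.+1)%N.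
Proof.
move=> HK; rewrite /cong_update mbind_cost mbind_cost /= addn0.
apply: leq_add; first exact: init_arr_cost.
have := @mfold_cost _ _ ob (enum 'I_n) (cong, (init_arr (fun _ : 'I_n => None)).1) K.
rewrite size_enum_ord; apply => t acc; rewrite /ob.
case E: (P t) => [q|] //.
apply: leq_trans (HK t q E).
have := @mfold_cost _ _ (ib t) q acc 0; rewrite muln1; apply => x a.
by rewrite /ib; case: ifP.
Qed.
End Cong.

Lemma C_update_val n tau (cong : 'I_n -> nat) :
  (C_update tau cong).1 = fun v => (tau < 2 * cong v)%N.
Proof.
apply: functional_extensionality => v.
by rewrite /C_update (@mfold_upd n _ _ (fun v => (tau < 2 * cong v)%N)) ?mem_enum.
Qed.

Lemma C_update_cost n tau (cong : 'I_n -> nat) : ((C_update tau cong).2 <= n)%N.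
Proof.
have := @mfold_cost _ _ (fun v (C : 'I_n -> bool) => mret (upd C v (tau < 2 * cong v)%N))
  (enum 'I_n) (fun _ => false) 0.
by rewrite size_enum_ord muln1; apply.
Qed.

Lemma recon_cost n (par : nat -> 'I_n -> option 'I_n) r v acc :
  (recon par r v acc).2 = r.
Proof. elim: r v acc => [|r IH] v acc //=. by case: (par r.+1 v) => [u|]; rewrite IH. Qed.

Arguments bf_paths : simpl never.
Arguments cong_update : simpl never.
Arguments C_update : simpl never.
Arguments bf : simpl never.
Arguments init_arr : simpl never.
Arguments recon : simpl never.

Section Proc.
Variables (R : realDomainType) (n : nat) (w : 'I_n -> 'I_n -> option R) (tau : nat).

Lemma bf_cost C s k : ((bf w C s k).2 <= n + k * (n * n.+1).+1)%N.
Proof.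
rewrite /bf mbind_cost; apply: leq_add; first exact: init_arr_cost.
have := @mfold_cost _ _ (bfbody w C) (iota 1 k)
   ((init_arr (fun v => if (v == s) && ~~ C s then Some 0%R else None)).1,
    fun _ _ => None) (n * n.+1).
rewrite size_iota; apply => r acc; rewrite /bfbody mbind_cost addn0.
exact: bf_round_cost.
Qed.

Lemma bf_paths_cost C s k :
  ((bf_paths w C s k).2 <= n + k * (n * n.+1).+1 + n * k.+1)%N.
Proof.
rewrite /bf_paths mbind_cost; apply: leq_add; first exact: bf_cost.
set res := (bf w C s k).1.
have := @mfold_cost _ _ (fun t (P : 'I_n -> option (seq 'I_n)) =>
      if res.1 t is Some _ then
        mbind (recon res.2 k t [:: t]) (fun q => mret (upd P t (Some q)))
      else mret (upd P t None)) (enum 'I_n) (fun _ => None) k.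
rewrite size_enum_ord; apply => t P; case: (res.1 t) => [a|] //.
by rewrite mbind_cost recon_cost addn0.
Qed.

Opaque bf_paths cong_update C_update.
Lemma process_val s i st :
  impl_outcome (process w tau s i (2^i) (3^i) st).1 =
  dp_step tau (impl_outcome st) s i (bf_paths w st.1.1 s (hop i)).1.
Proof.
case: st => [[C cong] pi] /=.
rewrite /process mbind_val mbind_val mbind_val /=.
rewrite cong_update_val C_update_val /dp_step /=.
congr DPState.
apply: functional_extensionality => s'; apply: functional_extensionality => i'.
apply: functional_extensionality => t.
by case: ifP.
Qed.

Lemma process_cost s i p2 p3 st : (0 < n)%N ->
  ((process w tau s i p2 p3 st).2 <= 10 * n ^ 2 * (p3 %/ p2).+1)%N.
Proof.
move=> Hn; case: st => [[C cong] pi].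
rewrite /process /=.
set k := p3 %/ p2.
have HK : forall t q, (bf_paths w C s k).1 t = Some q -> (size q <= k.+1)%N.
  by move=> t q; have [_ H] := bf_paths_spec w C s k t; apply: H.
apply: leq_trans (_ : _ <= (n + k * (n * n.+1).+1 + n * k.+1) +
                           ((n + n * k.+2) + (n + 0)))%N _.
  apply: mbind_le (bf_paths_cost C s k) _; cbv beta.
  apply: mbind_le (cong_update_cost _ _ HK) _; cbv beta.
  apply: mbind_le (C_update_cost _ _) _; done.
rewrite expnS expn1. nia.
Qed.
End Proc.

Lemma dp_run_cat (R : realDomainType) n (w : 'I_n -> 'I_n -> option R) tau a l1 b l2 c :
  dp_run w tau a l1 b -> dp_run w tau b l2 c -> dp_run w tau a (l1 ++ l2) c.
Proof.
elim=> [st|st s i P rest st' HP Hr IH] H //=.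
by apply: dp_run_cons => //; apply: IH.
Qed.

Section Root.
Variables (R : realDomainType) (n : nat) (w : 'I_n -> 'I_n -> option R) (tau : nat).
Hypothesis Hn : (0 < n)%N.

Lemma shortest_st st k s t :
  shortest_hpath w (~: dpC (impl_outcome st)) k s t ((bf_paths w st.1.1 s k).1 t).
Proof. case: st => [[C cong] pi]; exact: (bf_paths_spec w C s k t).1. Qed.

Definition prbody (s : 'I_n) i (acc : impl_state n * nat * nat) : M (impl_state n * nat * nat) :=
  let: (st', p2, p3) := acc in
  mbind (process w tau s i p2 p3 st') (fun st'' => mret (st'', (p2 * 2)%N, (p3 * 3)%N)).

Lemma pr_fold s m : forall j st,
  dp_run w tau (impl_outcome st) [seq (s, i) | i <- iota j m]
     (impl_outcome (mfold (prbody s) (iota j m) (st, 2^j, 3^j)%N).1.1.1) /\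
  ((mfold (prbody s) (iota j m) (st, 2^j, 3^j)).2 <=
     \sum_(i <- iota j m) 11 * n ^ 2 * (hop i).+1)%N.
Proof.
elim: m => [|m IH] j st.
  by rewrite mfold_nil big_nil; split => //; apply: dp_run_nil.
rewrite -[iota j m.+1]/(j :: iota j.+1 m).
set st1 := (process w tau s j (2^j) (3^j) st).1.
have E : (prbody s j (st, 2^j, 3^j)%N).1 = (st1, 2^j.+1, 3^j.+1)%N.
  by rewrite /prbody mbind_val /= !expnSr.
have [Hrun Hc] := IH j.+1 st1.
split.
  rewrite mfold_cons E /=.
  apply: (@dp_run_cons _ _ w tau _ s j (bf_paths w st.1.1 s (hop j)).1).
    move=> t; exact: shortest_st.
  by rewrite -process_val.
rewrite mfold_cons_cost E big_cons.
have Hp : ((prbody s j (st, 2^j, 3^j)%N).2 <= 10 * n ^ 2 * (hop j).+1)%N.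
  by rewrite /prbody mbind_cost addn0; apply: process_cost.
have H1 : (1 <= n ^ 2 * (hop j).+1)%N by rewrite muln_gt0 expn_gt0 Hn.
move: Hp Hc H1; rewrite -!mulnA.
move: (n ^ 2 * (hop j).+1)%N => X; lia.
Qed.

Lemma pr_val s ihv st :
  dp_run w tau (impl_outcome st) [seq (s, i) | i <- iota 0 ihv.+1]
     (impl_outcome (process_root w tau ihv s st).1) /\
  ((process_root w tau ihv s st).2 <=
     \sum_(i <- iota 0 ihv.+1) 11 * n ^ 2 * (hop i).+1)%N.
Proof.
rewrite /process_root mbind_val mbind_cost addn0.
exact: (pr_fold s ihv.+1 0 st).
Qed.

Lemma roots_val ihv ord : forall st,
  dp_run w tau (impl_outcome st) [seq (s, i) | s <- ord, i <- iota 0 ihv.+1]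
     (impl_outcome (mfold (process_root w tau ihv) ord st).1).
Proof.
elim: ord => [|s ord IH] st.
  by rewrite mfold_nil; apply: dp_run_nil.
rewrite allpairs_cons mfold_cons.
apply: dp_run_cat (pr_val s ihv st).1 (IH _).
Qed.

Lemma roots_cost ihv ord st :
  ((mfold (process_root w tau ihv) ord st).2 <=
     size ord * (\sum_(i <- iota 0 ihv.+1) 11 * n ^ 2 * (hop i).+1).+1)%N.
Proof. apply: mfold_cost => s st'; exact: (pr_val s ihv st').2. Qed.
End Root.

Lemma sum_hop_split (l : seq nat) c :
  (\sum_(i <- l) c * (hop i).+1 = c * (\sum_(i <- l) hop i + size l))%N.
Proof.
elim: l => [|x l IH]; first by rewrite !big_nil muln0.
rewrite !big_cons IH /=; lia.
Qed.

Lemma pow_bound h : (h * 2^h <= 3^h)%N.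
Proof.
elim: h => [|h IH] //. case: h IH => [|h] IH //. case: h IH => [|h] IH //.
rewrite (expnS 2 h.+2) (expnS 3 h.+2). nia.
Qed.

Lemma geo m : ((\sum_(i <- iota 0 m.+1) hop i) * 2^m <= 3^m.+1)%N.
Proof.
elim: m => [|m IH]; first by rewrite big_cons big_nil.
rewrite -addn1 iotaD big_cat add0n addn1 big_seq1.
have H : (hop m.+1 * 2^m.+1 <= 3^m.+1)%N by apply: leq_divM.
move: IH H; rewrite (expnS 2 m) (expnS 3 m.+1) (expnS 3 m).
move: (\sum_(i <- _) _)%N (hop _) (2^m)%N (3^m)%N => S hm X Y.
move=> H1 H2; change ((S + hm) * (2 * X) <= 3 * (3 * Y))%N; nia.
Qed.

Lemma ih_has h : has (fun i => h * 2 ^ i <= 3 ^ i)%N (iota 0 h.+1).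
Proof.
apply/hasP; exists h; last exact: pow_bound.
by rewrite mem_iota add0n leq0n ltnSn.
Qed.

Lemma ih_le h : (ih h <= h)%N.
Proof. have := ih_has h; rewrite has_find size_iota /ih; lia. Qed.

Lemma ih_min h m : ih h = m.+1 -> ~~ (h * 2 ^ m <= 3 ^ m)%N.
Proof.
move=> E; have Hm : (m < ih h)%N by rewrite E.
have := before_find 0 Hm; rewrite nth_iota ?add0n => [->//|].
have := ih_le h; lia.
Qed.

Lemma sum_hop h : (0 < h)%N -> (\sum_(i <- iota 0 (ih h).+1) hop i <= 5 * h)%N.
Proof.
move=> Hh; case E: (ih h) => [|m].
  by rewrite big_seq1 /hop; lia.
have G := geo m.+1.
have Hmin := ih_min E; rewrite -ltnNge in Hmin.
move: G Hmin; rewrite (expnS 2 m) (expnS 3 m.+1) (expnS 3 m).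
have X0 : (0 < 2 ^ m)%N by rewrite expn_gt0.
move: X0 (\sum_(i <- _) _)%N (2^m)%N (3^m)%N => + S X Y.
move=> X0 H1 H2; nia.
Qed.

Lemma find_ih_val h fuel : forall i, (h * 2 ^ (i + fuel) <= 3 ^ (i + fuel))%N ->
  (find_ih h fuel i (2 ^ i) (3 ^ i)).1 =
  (i + find (fun i => h * 2 ^ i <= 3 ^ i) (iota i fuel.+1))%N.
Proof.
elim: fuel => [|f IH] i H.
  rewrite addn0 in H; by rewrite /= H addn0.
rewrite /=; case: ifP => Hp; first by rewrite addn0.
rewrite -!expnSr IH; first by rewrite addSnnS.
by rewrite addSnnS.
Qed.

Lemma find_ih_cost h fuel : forall i p2 p3, ((find_ih h fuel i p2 p3).2 <= fuel.+1)%N.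
Proof.
elim: fuel => [|f IH] i p2 p3 /=; case: ifP => // _.
by rewrite ltnS.
Qed.

Theorem lemma3p3 :
  exists c : nat,
  forall (R : realDomainType) (n : nat) (w : 'I_n -> 'I_n -> option R)
         (tau h : nat),
    0 < n -> 0 < h -> 2 * n ^ 2 <= tau ->
    DetPreprocessing_outcome w tau h (impl_outcome (DetPre_impl w tau h).1) /\
    (DetPre_impl w tau h).2 <= c * (n ^ 3 * h).
Proof.
exists 200 => R n w tau h Hn Hh _.
have Eih : (find_ih h h 0 1 1).1 = ih h.
  by rewrite (find_ih_val (i := 0)) // add0n pow_bound.
split.
  rewrite /DetPre_impl mbind_val Eih mbind_val init_arr_val mbind_val init_arr_val.
  rewrite mbind_val.
  exists (enum 'I_n); split => //.
  have -> : dp_init n = impl_outcome ((fun _ : 'I_n => false), (fun _ : 'I_n => 0%N),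
                                       (fun _ _ _ => None)).
    by rewrite /dp_init /=; congr DPState; apply/setP => v; rewrite !inE.
  exact: roots_val.
set I := ih h.
set S := (\sum_(i <- iota 0 I.+1) hop i)%N.
have HS : (S <= 5 * h)%N by apply: sum_hop.
have HI : (I <= h)%N by apply: ih_le.
set B := (\sum_(i <- iota 0 I.+1) 11 * n ^ 2 * (hop i).+1)%N.
have EB : B = (11 * n ^ 2 * (S + I.+1))%N by rewrite /B sum_hop_split size_iota.
rewrite /DetPre_impl.
apply: leq_trans (_ : _ <= h.+1 + (n + (n + (n * (I.+1 * n.+1).+1 + n * B.+1))))%N _.
  apply: mbind_le (find_ih_cost h h 0 1 1) _; cbv beta; rewrite Eih.
  apply: mbind_le (init_arr_cost _) _; cbv beta.
  apply: mbind_le (init_arr_cost _) _; cbv beta.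
  apply: mbind_le _ _.
    have := @mfold_cost _ _ (fun (_ : 'I_n) (u : unit) =>
       mfold (fun (_ : nat) (u' : unit) =>
         mfold (fun (_ : 'I_n) (u'' : unit) => mret u'') (enum 'I_n) u')
         (iota 0 I.+1) u) (enum 'I_n) tt (I.+1 * n.+1).
    rewrite size_enum_ord; apply => x u.
    have := @mfold_cost _ _ (fun (_ : nat) (u' : unit) =>
         mfold (fun (_ : 'I_n) (u'' : unit) => mret u'') (enum 'I_n) u')
         (iota 0 I.+1) u n.
    rewrite size_iota; apply => y u'.
    have := @mfold_cost _ _ (fun (_ : 'I_n) (u'' : unit) => mret u'') (enum 'I_n) u' 0.
    by rewrite size_enum_ord muln1; apply.
  cbv beta; rewrite !init_arr_val.
  have := roots_cost w tau Hn I (enum 'I_n) ((fun=> false), (fun=> 0%N), (fun _ _ _ => None)).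
  by rewrite size_enum_ord.
rewrite EB.
have A1 : (S + I.+1 <= 7 * h)%N by lia.
clearbody B; clearbody S; clearbody I.
have Hh3 : (1 <= n ^ 3)%N by rewrite expn_gt0 Hn.
have E1 : (n * (11 * n ^ 2 * (S + I.+1)) = 11 * ((S + I.+1) * n ^ 3))%N.
  by rewrite expnS; ring.
have F1 : ((S + I.+1) * n ^ 3 <= 7 * (n ^ 3 * h))%N.
  have -> : (7 * (n ^ 3 * h) = (7 * h) * n ^ 3)%N by ring.
  by rewrite leq_mul2r A1 orbT.
have E2 : (n * (I.+1 * n.+1) <= 4 * (n ^ 3 * h))%N.
  have G1 : (I.+1 <= 2 * h)%N by lia.
  have G2 : (n.+1 <= 2 * n)%N by lia.
  have G3 : (n * (I.+1 * n.+1) <= n * (2 * h * (2 * n)))%N.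
    by rewrite leq_mul2l (leq_mul G1 G2) orbT.
  apply: leq_trans G3 _.
  have G4 : (n * n <= n ^ 3)%N.
    have -> : (n ^ 3 = n * n * n)%N by ring.
    by rewrite -{1}(muln1 (n * n)) leq_mul2l Hn orbT.
  have -> : (n * (2 * h * (2 * n)) = 4 * ((n * n) * h))%N by ring.
  by rewrite leq_mul2l /= leq_mul2r G4 orbT.
have G5 : (1 <= n ^ 3 * h)%N by rewrite muln_gt0 Hh3 Hh.
have G6 : (h <= n ^ 3 * h)%N by rewrite -{1}(mul1n h) leq_mul2r Hh3 orbT.
have G7 : (n <= n ^ 3 * h)%N.
  apply: leq_trans (_ : n <= n ^ 3)%N _; last by rewrite -{1}(muln1 (n^3)) leq_mul2l Hh orbT.
  by rewrite -{1}(expn1 n) leq_pexp2l.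
move: E1 F1 E2 G5 G6 G7.
move: (11 * n ^ 2 * (S + I.+1))%N ((S + I.+1) * n ^ 3)%N (I.+1 * n.+1)%N (n ^ 3 * h)%N => a b c N.
move=> E1 F1 E2 G5 G6 G7.
nia.
Qed.
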